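(* For every family $\mathcal F$ of edge-colored undirected graphs there is a family $\vec{\mathcal F}$ of edge-colored oriented graphs such that $\mathrm{Col}(\mathcal F)$ is polynomial-time equivalent to $\mathrm{Col}(\vec{\mathcal F})$, and $\mathrm{Ext}(\mathcal F)$ is polynomial-time equivalent to $\mathrm{Ext}(\vec{\mathcal F})$.
   Context: Edge colors come from a fixed finite set $[r]$. An edge-colored (undirected, resp. oriented) graph is $(G,\gamma)$ with $\gamma\colon E(G)\to[r]$, where for oriented graphs $E(G)$ is a set of arcs (ordered pairs, no loops, no pair of opposite arcs). $(G,\gamma)$ is $\mathcal F$-free if no $(F,\phi)\in\mathcal F$ admits a (graph, resp. arc-preserving digraph) homomorphism $h\colon F\to G$ with $\gamma(h(e))=\phi(e)$ for all edges $e$ of $F$. $\mathrm{Col}(\mathcal F)$: given a finite graph (resp. oriented graph) $X$, decide whether there is $\gamma\colon E(X)\to[r]$ with $(X,\gamma)$ $\mathcal F$-free. $\mathrm{Ext}(\mathcal F)$: given a finite graph (resp. oriented graph) $X$ and a partial map $\xi$ from a subset of $E(X)$ to $[r]$, decide whether there is $\gamma\colon E(X)\to[r]$ extending $\xi$ with $(X,\gamma)$ $\mathcal F$-free. *)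

(* Defs.v *)
From mathcomp Require Import all_boot.
Unset Implicit Arguments.
Unset Strict Implicit.
Unset Printing Implicit Defensive.

Record ugraph := UGraph {
  uv : nat;
  uadj : 'I_uv -> 'I_uv -> bool;
  uadj_sym : forall x y, uadj x y = uadj y x;
  uadj_irr : forall x, uadj x x = false }.

Record ograph := OGraph {
  ov : nat;
  oarc : 'I_ov -> 'I_ov -> bool;
  oarc_irr : forall x, oarc x x = false;
  oarc_asym : forall x y, oarc x y -> oarc y x = false }.

(* For undirected graphs
   the color of edge {x,y} is ucol x y = ucol y x; the value on non-edges
   is irrelevant. *)
Record ucgraph (r : nat) := UCGraph {
  ucg : ugraph;
  ucol : 'I_(uv ucg) -> 'I_(uv ucg) -> 'I_r;
  ucol_sym : forall x y, ucol x y = ucol y x }.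

Record ocgraph (r : nat) := OCGraph {
  ocg : ograph;
  ocol : 'I_(ov ocg) -> 'I_(ov ocg) -> 'I_r }.

Arguments ucg {r}. Arguments uadj {u}. Arguments oarc {o}. Arguments ucol {r}. Arguments ocg {r}. Arguments ocol {r}.

Definition uhom r (F : ucgraph r) (X : ugraph)
    (gam : 'I_(uv X) -> 'I_(uv X) -> 'I_r) (h : 'I_(uv (ucg F)) -> 'I_(uv X)) :=
  forall u v, uadj u v -> uadj (h u) (h v) /\ gam (h u) (h v) = ucol F u v.

Definition ohom r (F : ocgraph r) (X : ograph)
    (gam : 'I_(ov X) -> 'I_(ov X) -> 'I_r) (h : 'I_(ov (ocg F)) -> 'I_(ov X)) :=
  forall u v, oarc u v -> oarc (h u) (h v) /\ gam (h u) (h v) = ocol F u v.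

Definition ufree r (Fam : ucgraph r -> Prop) (X : ugraph) gam :=
  ~ exists F h, Fam F /\ uhom r F X gam h.
Definition ofree r (Fam : ocgraph r -> Prop) (X : ograph) gam :=
  ~ exists F h, Fam F /\ ohom r F X gam h.

Definition ucolorable r (Fam : ucgraph r -> Prop) (X : ugraph) :=
  exists gam : 'I_(uv X) -> 'I_(uv X) -> 'I_r,
    (forall x y, gam x y = gam y x) /\ ufree r Fam X gam.
Definition ocolorable r (Fam : ocgraph r -> Prop) (X : ograph) :=
  exists gam : 'I_(ov X) -> 'I_(ov X) -> 'I_r, ofree r Fam X gam.

(* Partial precolorings xi (None = uncolored), defined on edges only. *)
Definition upartial r (X : ugraph) (xi : 'I_(uv X) -> 'I_(uv X) -> option 'I_r) :=
  (forall x y, xi x y = xi y x) /\ (forall x y, ~~ uadj x y -> xi x y = None).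
Definition opartial r (X : ograph) (xi : 'I_(ov X) -> 'I_(ov X) -> option 'I_r) :=
  forall x y, ~~ oarc x y -> xi x y = None.

Definition uextendable r (Fam : ucgraph r -> Prop) (X : ugraph) xi :=
  exists gam : 'I_(uv X) -> 'I_(uv X) -> 'I_r,
    [/\ forall x y, gam x y = gam y x,
        forall x y c, xi x y = Some c -> gam x y = c
      & ufree r Fam X gam].
Definition oextendable r (Fam : ocgraph r -> Prop) (X : ograph) xi :=
  exists gam : 'I_(ov X) -> 'I_(ov X) -> 'I_r,
    (forall x y c, xi x y = Some c -> gam x y = c) /\ ofree r Fam X gam.

(*   n is written in unary (1^n 0), followed by one block for each    *)
(*   pair i < j of vertices in lexicographic order.                   *)

Definition pairs_enc n (blk : 'I_n -> 'I_n -> seq bool) : seq bool :=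
  nseq n true ++ false ::
  flatten (flatten [seq [seq blk i j | j <- filter (fun j : 'I_n => i < j) (enum 'I_n)] | i <- enum 'I_n]).

Definition onehot r (o : option 'I_r) : seq bool := [seq o == Some c | c <- enum 'I_r].

Definition enc_ucol (X : ugraph) := pairs_enc (uv X) (fun i j => [:: uadj i j]).
Definition enc_ocol (X : ograph) := pairs_enc (ov X) (fun i j => [:: oarc i j; oarc j i]).
Definition enc_uext r (X : ugraph) (xi : 'I_(uv X) -> 'I_(uv X) -> option 'I_r) :=
  pairs_enc (uv X) (fun i j => uadj i j :: onehot r (xi i j)).
Definition enc_oext r (X : ograph) (xi : 'I_(ov X) -> 'I_(ov X) -> option 'I_r) :=
  pairs_enc (ov X) (fun i j => oarc i j :: oarc j i :: onehot r (xi i j) ++ onehot r (xi j i)).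

Definition ColU r (Fam : ucgraph r -> Prop) (s : seq bool) : Prop :=
  exists X, enc_ucol X = s /\ ucolorable r Fam X.
Definition ColO r (Fam : ocgraph r -> Prop) (s : seq bool) : Prop :=
  exists X, enc_ocol X = s /\ ocolorable r Fam X.
Definition ExtU r (Fam : ucgraph r -> Prop) (s : seq bool) : Prop :=
  exists X xi, [/\ upartial r X xi, enc_uext r X xi = s & uextendable r Fam X xi].
Definition ExtO r (Fam : ocgraph r -> Prop) (s : seq bool) : Prop :=
  exists X xi, [/\ opartial r X xi, enc_oext r X xi = s & oextendable r Fam X xi].

Inductive move := MoveL | MoveR | Stay.

Record TM := MkTM {
  tm_state : finType;
  tm_start : tm_state;
  tm_halt : pred tm_state;
  tm_delta : tm_state -> option bool -> tm_state * option bool * move }.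

(* configuration: state, left part of tape (nearest cell first),
   scanned cell, right part of tape; cells beyond are blank (None). *)
Definition config (M : TM) := (tm_state M * seq (option bool) * option bool * seq (option bool))%type.

Definition tm_step (M : TM) (c : config M) : config M :=
  let: (q, l, a, rt) := c in
  if tm_halt M q then c else
  let: (q', b, m) := tm_delta M q a in
  match m with
  | Stay => (q', l, b, rt)
  | MoveL => (q', behead l, head None l, b :: rt)
  | MoveR => (q', b :: l, head None rt, behead rt)
  end.

Definition tm_init (M : TM) (x : seq bool) : config M :=
  (tm_start M, [::], head None (map Some x), behead (map Some x)).

Definition tm_run (M : TM) (t : nat) (x : seq bool) : config M :=
  iter t (tm_step M) (tm_init M x).

Fixpoint take_bits (s : seq (option bool)) : seq bool :=
  if s is Some b :: s' then b :: take_bits s' else [::].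

Definition tm_output (M : TM) (c : config M) : seq bool :=
  let: (_, _, a, rt) := c in take_bits (a :: rt).

Definition tm_halted (M : TM) (c : config M) : bool :=
  let: (q, _, _, _) := c in tm_halt M q.

Definition poly_time_computable (f : seq bool -> seq bool) : Prop :=
  exists (M : TM) (k d : nat), forall x, exists t,
    t <= k * (size x) ^ d + k /\
    tm_halted M (tm_run M t x) /\ tm_output M (tm_run M t x) = f x.

Definition poly_reduces (A B : seq bool -> Prop) : Prop :=
  exists f, poly_time_computable f /\ forall x, A x <-> B (f x).

Definition poly_equiv (A B : seq bool -> Prop) : Prop :=
  poly_reduces A B /\ poly_reduces B A.

(* Main.v *)
From Stdlib Require Import ZArith Lia FunctionalExtensionality ProofIrrelevance.
Require Import Defs.
From mathcomp Require Import all_boot zify.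
Set Implicit Arguments. Unset Strict Implicit.

Section TMsim.
Variable M : TM.
Definition tape := Z -> option bool.
Definition upd (T : tape) (h : Z) (b : option bool) : tape :=
  fun z => if Z.eqb z h then b else T z.
Definition mv (m : move) : Z := match m with MoveL => (-1)%Z | MoveR => 1%Z | Stay => 0%Z end.
Definition aconf := (tm_state M * tape * Z)%type.
Definition astep (c : aconf) : aconf :=
  let: (q, T, h) := c in
  if tm_halt M q then c else
  let: (q', b, m) := tm_delta M q (T h) in (q', upd T h b, (h + mv m)%Z).
Definition rep (c : config M) (ac : aconf) : Prop :=
  let: (q, l, a, rt) := c in let: (q', T, h) := ac in
  [/\ q = q', a = T h, (forall i : nat, nth None rt i = T (h + 1 + Z.of_nat i)%Z)
    & (forall i : nat, nth None l i = T (h - 1 - Z.of_nat i)%Z)].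

Lemma upd_at T h b : upd T h b h = b.
Proof. by rewrite /upd Z.eqb_refl. Qed.
Lemma upd_ne T h b z : z <> h -> upd T h b z = T z.
Proof. by move=> ne; rewrite /upd; case: (Z.eqb_spec z h). Qed.
Lemma upd_same T h : upd T h (T h) = T.
Proof. apply: functional_extensionality => z; rewrite /upd; by case: (Z.eqb_spec z h) => [->|]. Qed.

Lemma upd_at' T h h' b : h = h' -> b = upd T h b h'.
Proof. by move=> <-; rewrite upd_at. Qed.

Lemma rep_step c ac : rep c ac -> rep (tm_step M c) (astep ac).
Proof.
case: c => [[[q l] a] rt]; case: ac => [[q' T] h] [<- -> Hr Hl] /=.
case: (tm_halt M q) => //.
case: (tm_delta M q (T h)) => [[q2 b] m].
case: m; split => //=.
- by rewrite -[head _ _]/(nth None l 0) Hl upd_ne; [f_equal; lia | lia].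
- case=> [|i] /=; first by apply: upd_at'; lia.
  by rewrite Hr upd_ne; [f_equal; lia | lia].
- by move=> i; rewrite nth_behead Hl upd_ne; [f_equal; lia | lia].
- by rewrite -[head _ _]/(nth None rt 0) Hr upd_ne; [f_equal; lia | lia].
- by move=> i; rewrite nth_behead Hr upd_ne; [f_equal; lia | lia].
- case=> [|i] /=; first by apply: upd_at'; lia.
  by rewrite Hl upd_ne; [f_equal; lia | lia].
- by apply: upd_at'; lia.
- by move=> i; rewrite Hr upd_ne; [f_equal; lia | lia].
- by move=> i; rewrite Hl upd_ne; [f_equal; lia | lia].
Qed.

Lemma rep_iter n c ac : rep c ac -> rep (iter n (tm_step M) c) (iter n astep ac).
Proof. by elim: n => //= n IH /IH /rep_step. Qed.

Lemma take_bits_T (T : tape) w : forall (s : seq (option bool)) h,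
  (forall i : nat, nth None s i = T (h + Z.of_nat i)%Z) ->
  (forall i, i < size w -> T (h + Z.of_nat i)%Z = Some (nth false w i)) ->
  T (h + Z.of_nat (size w))%Z = None -> take_bits s = w.
Proof.
elim: w => [|c w IH] [|a s] h Hs Hin Hend //=.
- by move: (Hs 0); rewrite /= Hend => ->.
- by move: (Hs 0) (Hin 0 erefl) => /= <-.
- move: (Hs 0) (Hin 0 erefl) => /= ->; rewrite Z.add_0_r => ->; congr cons.
  apply: (IH s (h + 1)%Z).
  + by move=> i; move: (Hs i.+1) => /= ->; f_equal; lia.
  + move=> i Hi; have -> : (h + 1 + Z.of_nat i = h + Z.of_nat i.+1)%Z by lia.
    by rewrite (Hin i.+1).
  + by rewrite -Hend; f_equal; simpl size; lia.
Qed.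

Lemma rep_output q l a rt T h w : rep (q, l, a, rt) (q, T, h) ->
  (forall i, i < size w -> T (h + Z.of_nat i)%Z = Some (nth false w i)) ->
  T (h + Z.of_nat (size w))%Z = None -> tm_output M (q, l, a, rt) = w.
Proof.
move=> [_ Ha Hr _] Hin Hend /=; apply: (@take_bits_T T w (a :: rt) h) => //.
case=> [|i] /=; first by rewrite Ha Z.add_0_r.
by rewrite Hr; f_equal; lia.
Qed.

Definition reach (c c' : aconf) n := iter n astep c = c'.
Lemma reach_trans c1 c2 c3 n m : reach c1 c2 n -> reach c2 c3 m -> reach c1 c3 (n + m).
Proof. by rewrite /reach addnC iterD => -> . Qed.
Lemma reach0 c : reach c c 0. Proof. by []. Qed.
Lemma reach1 c : reach c (astep c) 1. Proof. by []. Qed.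

Lemma skipR q : tm_halt M q = false -> (forall c, tm_delta M q (Some c) = (q, Some c, MoveR)) ->
  forall m T h, (forall i, i < m -> T (h + Z.of_nat i)%Z <> None) ->
  reach (q, T, h) (q, T, h + Z.of_nat m)%Z m.
Proof.
move=> Hq Hd; elim=> [|m IH] T h HT; first by rewrite /reach /= Z.add_0_r.
rewrite /reach iterSr /= Hq.
have := HT 0 erefl; rewrite Z.add_0_r; case E: (T h) => [c|] // _.
rewrite Hd -E upd_same.
have -> : (h + Z.of_nat m.+1 = (h + 1) + Z.of_nat m)%Z by lia.
apply: IH => i Hi; have := HT i.+1 Hi; by have -> : (h + 1 + Z.of_nat i = h + Z.of_nat i.+1)%Z by lia.
Qed.

Lemma skipL q : tm_halt M q = false -> (forall c, tm_delta M q (Some c) = (q, Some c, MoveL)) ->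
  forall m T h, (forall i, i < m -> T (h - Z.of_nat i)%Z <> None) ->
  reach (q, T, h) (q, T, h - Z.of_nat m)%Z m.
Proof.
move=> Hq Hd; elim=> [|m IH] T h HT; first by rewrite /reach /= Z.sub_0_r.
rewrite /reach iterSr /= Hq.
have := HT 0 erefl; rewrite Z.sub_0_r; case E: (T h) => [c|] // _.
rewrite Hd -E upd_same.
have -> : (h - Z.of_nat m.+1 = (h + -1) - Z.of_nat m)%Z by lia.
apply: IH => i Hi; have := HT i.+1 Hi; by have -> : (h + -1 - Z.of_nat i = h - Z.of_nat i.+1)%Z by lia.
Qed.
End TMsim.

Section Mealy.
Variables (S : finType) (s0 : S) (stp : S -> bool -> S * seq bool) (acc : S -> bool) (B : nat).
Hypothesis HB : forall s b, size (stp s b).2 <= B.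

Definition tst : finType := (S + (S * bool) + (S * bool) + (S * bool * 'I_B.+1) + S + S + unit)%type.
Definition Rd s : tst := inl (inl (inl (inl (inl (inl s))))).
Definition SkIn p : tst := inl (inl (inl (inl (inl (inr p))))).
Definition SkOut p : tst := inl (inl (inl (inl (inr p)))).
Definition Wr t : tst := inl (inl (inl (inr t))).
Definition BkOut s : tst := inl (inl (inr s)).
Definition BkIn s : tst := inl (inr s).
Definition Done : tst := inr tt.

Definition wrstep (s : S) (b : bool) (k : nat) : tst * option bool * move :=
  let o := (stp s b).2 in
  if k.+1 < size o then (Wr (s, b, inord k.+1), Some (nth false o k), MoveR)
  else (BkOut (stp s b).1, Some (nth false o k), MoveL).

Definition delta (q : tst) (a : option bool) : tst * option bool * move :=
  match q with
  | inl (inl (inl (inl (inl (inl s))))) =>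
     match a with
     | None => if acc s then (Done, None, MoveR) else (Done, None, Stay)
     | Some b => if (stp s b).2 == [::] then (Rd (stp s b).1, None, MoveR)
                 else (SkIn (s, b), None, MoveR) end
  | inl (inl (inl (inl (inl (inr p))))) =>
     match a with Some c => (SkIn p, Some c, MoveR) | None => (SkOut p, None, MoveR) end
  | inl (inl (inl (inl (inr p)))) =>
     match a with Some c => (SkOut p, Some c, MoveR) | None => wrstep p.1 p.2 0 end
  | inl (inl (inl (inr t))) => wrstep t.1.1 t.1.2 t.2
  | inl (inl (inr s)) =>
     match a with Some c => (BkOut s, Some c, MoveL) | None => (BkIn s, None, MoveL) end
  | inl (inr s) =>
     match a with Some c => (BkIn s, Some c, MoveL) | None => (Rd s, None, MoveR) end
  | inr _ => (Done, a, Stay)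
  end.
Definition thalt (q : tst) : bool := if q is inr _ then true else false.
Definition MT := MkTM tst (Rd s0) thalt delta.

Fixpoint mrun (s : S) (x : seq bool) : S * seq bool :=
  if x is b :: x' then let p := stp s b in let r := mrun p.1 x' in (r.1, p.2 ++ r.2)
  else (s, [::]).
Definition mf x := if acc (mrun s0 x).1 then (mrun s0 x).2 else [::].

Definition Tof (u w : seq bool) (h : Z) : tape := fun z =>
  if (z - h <? 0)%Z then None else nth None (map Some u ++ None :: map Some w) (Z.to_nat (z - h)).

Lemma Tof_idx u w h (i : nat) : Tof u w h (h + Z.of_nat i)%Z = nth None (map Some u ++ None :: map Some w) i.
Proof.
rewrite /Tof; have -> : (h + Z.of_nat i - h = Z.of_nat i)%Z by lia.
by case: (Z.ltb_spec (Z.of_nat i) 0) => [|_]; [lia| rewrite Nat2Z.id].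
Qed.
Lemma Tof_idx' u w h z (i : nat) : z = (h + Z.of_nat i)%Z -> Tof u w h z = nth None (map Some u ++ None :: map Some w) i.
Proof. by move=> ->; apply: Tof_idx. Qed.
Lemma Tof_neg u w h z : (z < h)%Z -> Tof u w h z = None.
Proof. by move=> H; rewrite /Tof; case: (Z.ltb_spec (z - h) 0) => //; lia. Qed.

Lemma nthL_u (u w : seq bool) i : i < size u -> nth None (map Some u ++ None :: map Some w) i = Some (nth false u i).
Proof. by move=> H; rewrite nth_cat size_map H (nth_map false). Qed.
Lemma nthL_sep (u w : seq bool) : nth None (map Some u ++ None :: map Some w) (size u) = None.
Proof. by rewrite nth_cat size_map ltnn subnn. Qed.
Lemma nthL_w (u w : seq bool) i : i < size w -> nth None (map Some u ++ None :: map Some w) (size u + i).+1 = Some (nth false w i).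
Proof.
move=> H; rewrite nth_cat size_map ltnNge ltnW ?leq_addr //=.
have -> : ((size u + i).+1 - size u = i.+1)%N by lia.
by rewrite /= (nth_map false).
Qed.
Lemma nthL_end (u w : seq bool) i : nth None (map Some u ++ None :: map Some w) (size u + size w + i).+1 = None.
Proof. by rewrite nth_default // size_cat /= !size_map; lia. Qed.

Lemma Tof_erase b u w h : upd (Tof (b :: u) w h) h None = Tof u w (h + 1).
Proof.
apply: functional_extensionality => z; rewrite /upd.
case: (Z.eqb_spec z h) => [->|ne]; first by rewrite Tof_neg //; lia.
case: (Z.ltb_spec z h) => lt; first by rewrite !Tof_neg //; lia.
rewrite (@Tof_idx' _ _ _ z (Z.to_nat (z - h))); last lia.
rewrite (@Tof_idx' _ _ _ z (Z.to_nat (z - (h + 1)))); last lia.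
by have -> : Z.to_nat (z - h) = (Z.to_nat (z - (h + 1))).+1 by lia.
Qed.

Lemma L_rcons (u w : seq bool) c : map Some u ++ None :: map Some (rcons w c) = rcons (map Some u ++ None :: map Some w) (Some c).
Proof. by rewrite -!cats1 map_cat -catA. Qed.
Lemma Tof_app u w h c : upd (Tof u w h) (h + Z.of_nat (size u + size w).+1)%Z (Some c) = Tof u (rcons w c) h.
Proof.
apply: functional_extensionality => z; rewrite /upd.
case: (Z.eqb_spec z _) => [->|ne].
  rewrite Tof_idx L_rcons nth_rcons size_cat /= !size_map.
  by rewrite addnS ltnn eqxx.
case: (Z.ltb_spec z h) => lt; first by rewrite !Tof_neg //; lia.
rewrite !(@Tof_idx' _ _ _ z (Z.to_nat (z - h))); try lia.
rewrite L_rcons nth_rcons size_cat /= !size_map.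
case: ltnP => // H; rewrite nth_default ?size_cat /= ?size_map //.
case: eqP => //; lia.
Qed.

Lemma astep_eq q T h q' b m : thalt q = false -> delta q (T h) = (q', b, m) ->
  @astep MT (q, T, h) = (q', upd T h b, (h + mv m)%Z).
Proof. by move=> Hq Hd; rewrite /astep /= Hq Hd. Qed.

Lemma reach_step q T h q' b m c n : thalt q = false -> delta q (T h) = (q', b, m) ->
  @reach MT (q', upd T h b, (h + mv m)%Z) c n -> @reach MT (q, T, h) c n.+1.
Proof. by move=> Hq Hd; rewrite /reach iterSr (astep_eq Hq Hd). Qed.

Lemma reach_eq c c1 c2 n : c1 = c2 -> @reach MT c c1 n -> @reach MT c c2 n.
Proof. by move=> ->. Qed.

Lemma write_phase s b u out h : forall j k q, k + j.+1 = size (stp s b).2 ->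
  thalt q = false ->
  delta q (Tof u (out ++ take k (stp s b).2) h (h + Z.of_nat (size u + size out + k).+1)%Z) = wrstep s b k ->
  @reach MT (q, Tof u (out ++ take k (stp s b).2) h, (h + Z.of_nat (size u + size out + k).+1)%Z)
    (BkOut (stp s b).1, Tof u (out ++ (stp s b).2) h, (h + Z.of_nat (size u + size out + size (stp s b).2) - 1)%Z) j.+1.
Proof.
set o := (stp s b).2; elim=> [|j IH] k q Hk Hq.
- rewrite /wrstep -/o.
  have -> : k.+1 < size o = false by apply/negbTE; rewrite -Hk addn1 ltnn.
  move=> Hd; apply: (reach_step Hq Hd).
  rewrite /reach /=; congr (_, _, _).
  + have E : size (out ++ take k o) = size out + k by rewrite size_cat size_take; case: ltnP => //; lia.
    have := Tof_app u (out ++ take k o) h (nth false o k); rewrite E addnA => ->.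
    rewrite rcons_cat -take_nth; last by rewrite -Hk; lia.
    by rewrite -addn1 Hk take_size.
  + lia.
- rewrite /wrstep -/o.
  have Hlt : k.+1 < size o by rewrite -Hk; lia.
  rewrite Hlt => Hd; apply: (reach_step Hq Hd).
  have E : size (out ++ take k o) = size out + k by rewrite size_cat size_take; case: ltnP => //; lia.
  have := Tof_app u (out ++ take k o) h (nth false o k); rewrite E addnA => ->.
  rewrite rcons_cat -take_nth; last lia.
  have -> : (h + Z.of_nat (size u + size out + k).+1 + mv MoveR = h + Z.of_nat (size u + size out + k.+1).+1)%Z by rewrite /=; lia.
  apply: IH => //; first lia.
  rewrite /= inordK //; have := HB s b; rewrite -/o; lia.
Qed.

Lemma round s b u out h : exists n, n <= 2 * size u + 2 * size out + 2 * B + 4 /\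
  @reach MT (Rd s, Tof (b :: u) out h, h) (Rd (stp s b).1, Tof u (out ++ (stp s b).2) (h + 1), (h + 1)%Z) n.
Proof.
have Hd0 : delta (Rd s) (Tof (b :: u) out h h) =
   (if (stp s b).2 == [::] then Rd (stp s b).1 else SkIn (s, b), None, MoveR).
  by rewrite (@Tof_idx' _ _ _ h 0) /=; [case: eqP | lia].
have Hhb := HB s b.
case: eqP Hd0 => Ho Hd0.
  exists 1; split; first lia.
  apply: (reach_step (erefl false : thalt (Rd s) = false) Hd0); rewrite Tof_erase Ho cats0.
  by rewrite /reach /=.
set o := (stp s b).2 in Ho Hhb *; set s' := (stp s b).1.
have Ho1 : 0 < size o by case: (o) Ho.
set T1 := Tof u out (h + 1).
set T2 := Tof u (out ++ o) (h + 1).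
have R1 : @reach MT (Rd s, Tof (b :: u) out h, h) (SkIn (s, b), T1, (h + 1)%Z) 1.
  by apply: (reach_step (erefl false : thalt (Rd s) = false) Hd0); rewrite Tof_erase.
have R2 : @reach MT (SkIn (s, b), T1, (h + 1)%Z) (SkIn (s, b), T1, (h + 1 + Z.of_nat (size u))%Z) (size u).
  apply: (@skipR MT (SkIn (s, b)) (erefl false) (fun _ => erefl _)) => i Hi; by rewrite /T1 Tof_idx nthL_u.
have R3 : @reach MT (SkIn (s, b), T1, (h + 1 + Z.of_nat (size u))%Z) (SkOut (s, b), T1, (h + 1 + Z.of_nat (size u).+1)%Z) 1.
  have E : T1 (h + 1 + Z.of_nat (size u))%Z = None by rewrite /T1 Tof_idx nthL_sep.
  apply: (reach_step (b := None) (erefl false : thalt (SkIn (s, b)) = false)); first by rewrite E.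
  by rewrite -E upd_same; apply: reach_eq (reach0 _); f_equal; rewrite /=; lia.
have R4 : @reach MT (SkOut (s, b), T1, (h + 1 + Z.of_nat (size u).+1)%Z)
   (SkOut (s, b), T1, (h + 1 + Z.of_nat (size u + size out + 0).+1)%Z) (size out).
  apply: reach_eq (@skipR MT (SkOut (s, b)) (erefl false) (fun _ => erefl _) _ _ _ _); first by f_equal; lia.
  move=> i Hi; rewrite /T1 (@Tof_idx' _ _ _ _ (size u + i).+1); last lia.
  by rewrite nthL_w.
have R5 : @reach MT (SkOut (s, b), T1, (h + 1 + Z.of_nat (size u + size out + 0).+1)%Z)
   (BkOut s', T2, (h + 1 + Z.of_nat (size u + size out + size o) - 1)%Z) (size o).
  have W := @write_phase s b u out (h + 1) (size o).-1 0 (SkOut (s, b)).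
  rewrite take0 cats0 -/o prednK // in W; apply: W => //.
  by rewrite Tof_idx nthL_end.
have R6 : @reach MT (BkOut s', T2, (h + 1 + Z.of_nat (size u + size out + size o) - 1)%Z)
   (BkOut s', T2, (h + 1 + Z.of_nat (size u))%Z) (size out + size o).-1.
  apply: reach_eq (@skipL MT (BkOut s') (erefl false) (fun _ => erefl _) _ _ _ _); first by f_equal; lia.
  move=> i Hi; rewrite /T2 (@Tof_idx' _ _ _ _ (size u + (size out + size o - 2 - i)).+1); last lia.
  by rewrite nthL_w // size_cat; lia.
have R7 : @reach MT (BkOut s', T2, (h + 1 + Z.of_nat (size u))%Z) (BkIn s', T2, (h + Z.of_nat (size u))%Z) 1.
  have E : T2 (h + 1 + Z.of_nat (size u))%Z = None by rewrite /T2 Tof_idx nthL_sep.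
  apply: (reach_step (b := None) (erefl false : thalt (BkOut s') = false)); first by rewrite E.
  by rewrite -E upd_same; apply: reach_eq (reach0 _); f_equal; rewrite /=; lia.
have R8 : @reach MT (BkIn s', T2, (h + Z.of_nat (size u))%Z) (BkIn s', T2, h) (size u).
  apply: reach_eq (@skipL MT (BkIn s') (erefl false) (fun _ => erefl _) _ _ _ _); first by f_equal; lia.
  move=> i Hi; rewrite /T2 (@Tof_idx' _ _ _ _ (size u - 1 - i)); last lia.
  by rewrite nthL_u //; lia.
have R9 : @reach MT (BkIn s', T2, h) (Rd s', T2, (h + 1)%Z) 1.
  have E : T2 h = None by rewrite /T2 Tof_neg //; lia.
  apply: (reach_step (b := None) (erefl false : thalt (BkIn s') = false)); first by rewrite E.
  by rewrite -E upd_same.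
exists (1 + size u + 1 + size out + size o + (size out + size o).-1 + 1 + size u + 1); split; first lia.
apply: (reach_trans _ R9); apply: (reach_trans _ R8); apply: (reach_trans _ R7); apply: (reach_trans _ R6).
apply: (reach_trans _ R5); apply: (reach_trans _ R4); apply: (reach_trans _ R3); exact: (reach_trans R1 R2).
Qed.

Lemma run_all x : forall s out h, exists n,
  n <= size x * (2 * size x + 2 * size out + 2 * B * size x + 6 * B + 8) /\
  @reach MT (Rd s, Tof x out h, h)
    (Rd (mrun s x).1, Tof [::] (out ++ (mrun s x).2) (h + Z.of_nat (size x)), (h + Z.of_nat (size x))%Z) n.
Proof.
elim: x => [|b x IH] s out h.
  by exists 0; split => //; rewrite /= cats0 Z.add_0_r.
have [n1 [Hn1 R1]] := round s b x out h.
have [n2 [Hn2 R2]] := IH (stp s b).1 (out ++ (stp s b).2) (h + 1)%Z.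
exists (n1 + n2); split.
  have Hb := HB s b; move: Hn2; rewrite size_cat /=.
  set X := size x; set O := size out; set P := size (stp s b).2 in Hb *.
  move=> Hn2.
  have : X * (2 * X + 2 * (O + P) + 2 * B * X + 6 * B + 8) <= X * (2 * X + 2 * O + 2 * B * X + 8 * B + 8).
    by apply: leq_mul => //; lia.
  nia.
apply: (reach_trans R1); apply: reach_eq R2.
by rewrite /= catA; f_equal; [f_equal; f_equal; lia | lia].
Qed.

Lemma init_rep x : rep (tm_init MT x) (Rd s0, Tof x [::] 0%Z, 0%Z).
Proof.
rewrite /tm_init; split => //.
- by rewrite (@Tof_idx' _ _ _ _ 0) //; case: x.
- move=> i; rewrite (@Tof_idx' _ _ _ _ i.+1); last lia.
  rewrite nth_behead nth_cat size_map; case: ltnP => // H.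
  rewrite nth_default ?size_map; last lia.
  by case: (i.+1 - size x) => [|[]].
- by move=> i; rewrite Tof_neg ?nth_nil //; lia.
Qed.

Theorem mealy_poly : poly_time_computable mf.
Proof.
exists MT, (8 * B + 10), 2 => x.
have [n [Hn R]] := run_all x s0 [::] 0%Z.
set sf := (mrun s0 x).1 in R; set o := (mrun s0 x).2 in R.
set h := (0 + Z.of_nat (size x))%Z in R.
have Hh : Tof [::] ([::] ++ o) h h = None by rewrite (@Tof_idx' _ _ _ _ 0) //; lia.
exists n.+1; split.
  rewrite expnS expn1; have : size x <= size x * size x by case: (size x) => //= k; rewrite leq_pmulr.
  move: Hn; rewrite /= muln0 addn0; nia.
have Rf : @reach MT (Rd s0, Tof x [::] 0, 0%Z) (Done, Tof [::] o h, (if acc sf then h + 1 else h)%Z) n.+1.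
  rewrite /reach iterS R /= -/(astep _) /astep /= Hh.
  by case: (acc sf); rewrite -Hh upd_same //= Z.add_0_r.
have := rep_iter n.+1 (init_rep x); rewrite /tm_run Rf.
case: (iter _ _ _) => [[[q l] a] rt] Hrep; case: (Hrep) => Eq _ _ _; subst q.
split; first by [].
rewrite /mf -/sf -/o; case E: (acc sf).
- rewrite E in Hrep; apply: (rep_output Hrep).
  + move=> i Hi; rewrite (@Tof_idx' _ _ _ _ i.+1); last lia.
    by rewrite /= (nth_map false).
  + by rewrite (@Tof_idx' _ _ _ _ (size o).+1) ?nth_default //= ?size_map //; lia.
- rewrite E in Hrep; apply: (rep_output (w := [::]) Hrep) => //.
  by rewrite Z.add_0_r.
Qed.
End Mealy.

Fixpoint allseq n : seq (seq bool) :=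
  if n is n'.+1 then [::] :: [seq b :: s | b <- [:: true; false], s <- allseq n'] else [::].

Arguments allseq n : simpl never.

Lemma mem_allseq n s : (s \in allseq n) = (size s < n).
Proof.
elim: n s => [|n IH] [|b s] //=; rewrite /allseq -/allseq in_cons /=.
have Hc : forall c : bool, injective (cons c) by move=> c x y [->].
rewrite cats0 mem_cat ltnS -IH.
case: b; rewrite (mem_map (Hc _)).
- by case: (_ \in _) => //=; apply/mapP => -[].
- case: (s \in allseq n); rewrite ?orbT ?orbF //.
  by apply/negbTE/mapP => -[x _ H]; case: H.
Qed.

Lemma mrun_cat (S : finType) (stp : S -> bool -> S * seq bool) s x y :
  mrun stp s (x ++ y) = ((mrun stp (mrun stp s x).1 y).1, (mrun stp s x).2 ++ (mrun stp (mrun stp s x).1 y).2).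
Proof.
elim: x s => [|b x IH] s /=; first by case: (mrun stp s y).
by rewrite IH catA.
Qed.

Section Block.
Variables (p : nat) (valid : seq bool -> bool) (g : seq bool -> seq bool) (q : nat).
Hypothesis Hg : forall w, size w = p.+1 -> size (g w) = q.

Definition Buf : finType := seq_sub (allseq p.+1).
Definition e0 : Buf := @SeqSub _ (allseq p.+1) [::] (mem_head _ _).
Definition mk (w : seq bool) : Buf := insubd e0 w.
Lemma mkK w : size w < p.+1 -> ssval (mk w) = w.
Proof. by move=> H; rewrite /mk insubdK //; change (w \in allseq p.+1); rewrite mem_allseq. Qed.
Lemma e0E : e0 = mk [::].
Proof. by apply: val_inj; rewrite /= mkK. Qed.

Definition BS : finType := option (option Buf).
Definition bstep (st : BS) (b : bool) : BS * seq bool :=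
  match st with
  | None => (None, [::])
  | Some None => if b then (Some None, [:: true]) else (Some (Some e0), [:: false])
  | Some (Some w) =>
     let w' := rcons (ssval w) b in
     if size w' == p.+1 then (if valid w' then (Some (Some e0), g w') else (None, [::]))
     else (Some (Some (mk w')), [::])
  end.
Definition bacc (st : BS) : bool := if st is Some (Some w) then ssval w == [::] else false.

Lemma bstep_bound st b : size (bstep st b).2 <= maxn q 1.
Proof.
case: st => [[w|]|] /=; last by [].
- case: eqP => [E|_]; last by [].
  by case: (valid _) => //=; rewrite Hg ?leq_maxl //; apply/eqP; rewrite E.
- by case: b => /=; rewrite leq_maxr.
Qed.

Definition bf := mf (Some None) bstep bacc.

Lemma bf_poly : poly_time_computable bf.
Proof. exact: (mealy_poly (Some None) bacc bstep_bound). Qed.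

Lemma run_dead x : mrun bstep None x = (None, [::]).
Proof. by elim: x => //= b x ->. Qed.

Lemma run_partial w : forall bs, size w + size bs <= p.+1 -> size w < p.+1 ->
  mrun bstep (Some (Some (mk w))) bs =
  if size w + size bs == p.+1 then
    (if valid (w ++ bs) then (Some (Some (mk [::])), g (w ++ bs)) else (None, [::]))
  else (Some (Some (mk (w ++ bs))), [::]).
Proof.
move=> bs; elim: bs w => [|b bs IH] w Hs Hw /=.
  have -> : (size w + 0 == p.+1) = false by apply/eqP; lia.
  by rewrite [w ++ _]cats0.
rewrite mkK // size_rcons.
case: eqP => [E|NE].
  have E0 : bs = [::] by case: (bs) Hs => // c bs0 /=; lia.
  subst bs.
  rewrite /= addn1 E eqxx cats1; case: (valid _) => //=; by rewrite e0E cats0.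
rewrite IH ?size_rcons //; last lia.
rewrite cat_rcons addSnnS; case: ifP => _ //; case: ifP => _ //. all: move: Hs; rewrite /=; lia.
Qed.

Lemma run_short y : size y < p.+1 -> mrun bstep (Some (Some (mk [::]))) y = (Some (Some (mk y)), [::]).
Proof.
move=> H; have := @run_partial [::] y; rewrite /= add0n => -> //; last lia.
by case: eqP => // E; lia.
Qed.

Lemma run_block w : size w = p.+1 ->
  mrun bstep (Some (Some (mk [::]))) w = if valid w then (Some (Some (mk [::])), g w) else (None, [::]).
Proof. by move=> H; rewrite run_partial //= H ?eqxx // leqnn. Qed.

Definition okb w := (size w == p.+1) && valid w.

Lemma run_blocks bs : all okb bs ->
  mrun bstep (Some (Some (mk [::]))) (flatten bs) = (Some (Some (mk [::])), flatten (map g bs)).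
Proof.
elim: bs => //= w bs IH /andP [/andP [/eqP Hw Hv] Hbs].
by rewrite mrun_cat run_block // Hv /= IH.
Qed.

Lemma run_pre n y : mrun bstep (Some None) (nseq n true ++ false :: y) =
  ((mrun bstep (Some (Some (mk [::]))) y).1, nseq n true ++ false :: (mrun bstep (Some (Some (mk [::]))) y).2).
Proof. by elim: n => [|n IH] /=; [rewrite e0E | rewrite IH]. Qed.

Lemma run_pre1 n : mrun bstep (Some None) (nseq n true) = (Some None, nseq n true).
Proof. by elim: n => [|n IH] //=; rewrite IH. Qed.

Lemma bf_fwd n bs : all okb bs ->
  bf (nseq n true ++ false :: flatten bs) = nseq n true ++ false :: flatten (map g bs).
Proof. by move=> H; rewrite /bf /mf run_pre run_blocks //= mkK. Qed.

Lemma body_back y : bacc (mrun bstep (Some (Some (mk [::]))) y).1 ->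
  exists bs, [/\ y = flatten bs, all okb bs & (mrun bstep (Some (Some (mk [::]))) y).2 = flatten (map g bs)].
Proof.
elim: {y}(size y) {-2}y (leqnn (size y)) => [|m IH] y Hy.
  by case: y Hy => // _ _; exists [::].
case: (ltnP (size y) p.+1) => Hp.
  rewrite run_short // /= mkK //= => /eqP ->; by exists [::].
rewrite -(cat_take_drop p.+1 y) mrun_cat run_block; last by rewrite size_take; case: ltnP => //; lia.
case V: (valid _); last by rewrite /= run_dead.
rewrite /= => /IH [|bs [E A O]]; first by rewrite size_drop; lia.
exists (take p.+1 y :: bs); split => //=.
- by rewrite -E.
- rewrite /okb V andbT size_take A andbT; case: ltnP => // H; apply/eqP; lia.
- by rewrite O.
Qed.

Lemma bf_back s : bf s <> [::] -> exists n bs,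
  [/\ s = nseq n true ++ false :: flatten bs, all okb bs & bf s = nseq n true ++ false :: flatten (map g bs)].
Proof.
have [[n [y E]]|[n E]] : (exists n y, s = nseq n true ++ false :: y) \/ exists n, s = nseq n true; last first.
- by subst s; rewrite /bf /mf run_pre1.
- subst s; rewrite /bf /mf run_pre; case A: (bacc _) => // _.
  have [bs [E O H]] := body_back A; exists n, bs; split => //; by [rewrite E | rewrite H].
- elim: s => [|[] s IH]; first by right; exists 0.
  + case: IH => [[n [y ->]]|[n ->]]; [left; exists n.+1, y | right; exists n.+1]; by [].
  + by left; exists 0, s.
Qed.
End Block.

Section Graphs.
Variables (r : nat) (Fam : ucgraph r -> Prop).

Definition symO n (a : 'I_n -> 'I_n -> bool) (T : Type) (c : 'I_n -> 'I_n -> T) (u v : 'I_n) : T :=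
  if a u v then c u v else if a v u then c v u else if u <= v then c u v else c v u.

Lemma symO_sym n (a : 'I_n -> 'I_n -> bool) T (c : 'I_n -> 'I_n -> T) :
  (forall x y, a x y -> a y x = false) -> forall u v, symO a c u v = symO a c v u.
Proof.
move=> As u v; rewrite /symO.
case Auv: (a u v); first by rewrite (As _ _ Auv).
case Avu: (a v u) => //.
by case: (ltngtP u v) => [H|H|/val_inj ->].
Qed.

Definition orient (X : ugraph) : ograph.
refine (OGraph (uv X) (fun i j => (i < j) && uadj i j) _ _).
- by move=> x; rewrite ltnn.
- by move=> x y /andP [H _]; rewrite ltnNge ltnW.
Defined.

Definition und (Y : ograph) : ugraph.
refine (UGraph (ov Y) (fun i j => oarc i j || oarc j i) _ _).
- by move=> x y; rewrite orbC.
- by move=> x; rewrite oarc_irr.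
Defined.

Definition undC (F : ocgraph r) : ucgraph r :=
  UCGraph r (und (ocg F)) (symO oarc (ocol F)) (symO_sym (ocol F) (@oarc_asym _)).

Definition OFam (F : ocgraph r) : Prop := Fam (undC F).

Definition pullO (F : ucgraph r) (P : 'I_(uv (ucg F)) -> 'I_(uv (ucg F)) -> bool) : ocgraph r.
refine (OCGraph r (OGraph (uv (ucg F)) (fun u v => [&& uadj u v, P u v & ~~ P v u]) _ _) (ucol F)).
- by move=> x; rewrite andbN !andbF.
- by move=> x y /and3P [_ H1 H2]; rewrite H1 !andbF.
Defined.
Arguments pullO : clear implicits.

Lemma ucg_eq n (a1 a2 : 'I_n -> 'I_n -> bool) s1 i1 s2 i2 (c1 c2 : 'I_n -> 'I_n -> 'I_r) p1 p2 :
  (forall x y, a1 x y = a2 x y) -> (forall x y, c1 x y = c2 x y) ->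
  @UCGraph r (UGraph n a1 s1 i1) c1 p1 = @UCGraph r (UGraph n a2 s2 i2) c2 p2.
Proof.
move=> Ha Hc.
have E : a1 = a2 by apply: functional_extensionality => x; apply: functional_extensionality => y.
subst a2.
have E : c1 = c2 by apply: functional_extensionality => x; apply: functional_extensionality => y.
subst c2.
by rewrite (proof_irrelevance _ s1 s2) (proof_irrelevance _ i1 i2) (proof_irrelevance _ p1 p2).
Qed.

Lemma undC_pull F P : (forall u v, uadj u v -> P u v || P v u) ->
  (forall u v, uadj u v -> ~~ (P u v && P v u)) -> undC (pullO F P) = F.
Proof.
case: F P => [[n adj sym irr] col csym] /= P H1 H2.
apply: ucg_eq => x y /=.
- case A: (adj x y) => /=; last by rewrite sym A.
  rewrite sym A /=; have := H1 _ _ A; have := H2 _ _ A.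
  by case: (P x y); case: (P y x).
- rewrite /symO /=.
  by case: (adj x y); case: (P x y); case: (P y x); case: (adj y x) => //=; case: (x <= y).
Qed.

Definition xiO (X : ugraph) (xi : 'I_(uv X) -> 'I_(uv X) -> option 'I_r) : 'I_(ov (orient X)) -> 'I_(ov (orient X)) -> option 'I_r :=
  fun i j => if i < j then xi i j else None.
Definition xiU (Y : ograph) (xi : 'I_(ov Y) -> 'I_(ov Y) -> option 'I_r) : 'I_(uv (und Y)) -> 'I_(uv (und Y)) -> option 'I_r :=
  fun i j => if oarc i j then xi i j else xi j i.

Lemma M1 X xi : upartial r X xi ->
  (uextendable r Fam X xi <-> oextendable r OFam (orient X) (xiO xi)).
Proof.
move=> [Xs Xn]; split.
- move=> [gam [Hs Hx Hf]]; exists gam; split.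
    by move=> x y c; rewrite /xiO; case: ltnP => // _ /Hx.
  move=> [F' [h [HF Hh]]]; apply: Hf; exists (undC F'), h; split => // u v /= /orP [A|A].
  + have [/andP [_ E] G] := Hh u v A; split => //.
    by rewrite /symO A.
  + have [/andP [_ E] G] := Hh v u A; split; first by rewrite uadj_sym.
    rewrite Hs G /symO A; case: ifP => // B.
    by rewrite (oarc_asym _ _ _ B) in A.
- move=> [ogam [Hx Hf]].
  exists (fun x y : 'I_(uv X) => if x < y then ogam x y else ogam y x); split.
  + by move=> x y; case: (ltngtP x y) => [H|H|/val_inj ->].
  + move=> x y c E.
    case: (ltngtP x y) => [H|H|/val_inj Exy].
    * by apply: Hx; rewrite /xiO H.
    * by apply: Hx; rewrite /xiO H Xs.
    * by subst y; rewrite Xn ?uadj_irr in E.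
  + move=> [F [h [HF Hh]]]; apply: Hf.
    exists (pullO F (fun u v => h u < h v)), h; split.
    * rewrite /OFam undC_pull //.
      - move=> u v A; have [E _] := Hh u v A.
        case: (ltngtP (h u) (h v)) => // /val_inj Eh.
        by rewrite Eh uadj_irr in E.
      - by move=> u v _; case: (ltngtP (h u) (h v)).
    * move=> u v /= /and3P [A L _]; have [E G] := Hh u v A.
      by split; [rewrite /= L E | move: G; rewrite L].
Qed.

Lemma M2 Y xi : opartial r Y xi ->
  (oextendable r OFam Y xi <-> uextendable r Fam (und Y) (xiU xi)).
Proof.
move=> Yp; split.
- move=> [ogam [Hx Hf]].
  exists (symO oarc ogam); split.
  + exact: symO_sym (@oarc_asym _).
  + move=> x y c; rewrite /xiU /symO.
    case A: (oarc x y); first by move/Hx.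
    case B: (oarc y x); first by move/Hx.
    by rewrite Yp // B.
  + move=> [F [h [HF Hh]]]; apply: Hf.
    exists (pullO F (fun u v => oarc (h u) (h v))), h; split.
    * rewrite /OFam undC_pull //.
      - by move=> u v A; have [E _] := Hh u v A.
      - move=> u v _; apply/negP => /andP [B1 B2].
        by rewrite (oarc_asym _ _ _ B1) in B2.
    * move=> u v /= /and3P [A B _]; have [E G] := Hh u v A.
      by rewrite B -G /symO B.
- move=> [gam [Hs Hx Hf]]; exists gam; split.
  + move=> x y c E; apply: Hx; rewrite /xiU.
    case A: (oarc x y) => //.
    by rewrite Yp ?A in E.
  + move=> [F' [h [HF Hh]]]; apply: Hf; exists (undC F'), h; split => // u v /= /orP [A|A].
    * have [E G] := Hh u v A; split; first by rewrite /= E.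
      by rewrite /symO A.
    * have [E G] := Hh v u A; split; first by rewrite /= E orbT.
      rewrite Hs G /symO A; case: ifP => // B.
      by rewrite (oarc_asym _ _ _ B) in A.
Qed.

Lemma ucol_ext X : ucolorable r Fam X <-> uextendable r Fam X (fun _ _ => None).
Proof. by split => [[g [Hs Hf]]|[g [Hs _ Hf]]]; exists g. Qed.

Lemma ocol_ext Y xi : (forall x y, xi x y = None) -> (ocolorable r OFam Y <-> oextendable r OFam Y xi).
Proof. by move=> Hn; split => [[g Hf]|[g [_ Hf]]]; exists g => //; split => // x y c; rewrite Hn. Qed.

Lemma uext_none X xi : (forall x y, xi x y = None) -> (uextendable r Fam X xi <-> ucolorable r Fam X).
Proof. by move=> Hn; split => [[g [Hs _ Hf]]|[g [Hs Hf]]]; exists g => //; split => // x y c; rewrite Hn. Qed.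

Lemma C1 X : ucolorable r Fam X <-> ocolorable r OFam (orient X).
Proof.
have P : upartial r X (fun _ _ => None) by [].
have N : forall x y, @xiO X (fun _ _ => None) x y = None by move=> x y; rewrite /xiO; case: ifP.
have := M1 P; have := ucol_ext X; have := ocol_ext N; tauto.
Qed.

Lemma C2 Y : ocolorable r OFam Y <-> ucolorable r Fam (und Y).
Proof.
have P : opartial r Y (fun _ _ => None) by [].
have N : forall x y, @xiU Y (fun _ _ => None) x y = None by move=> x y; rewrite /xiU; case: ifP.
have := M2 P; have := uext_none N; have := @ocol_ext Y (fun _ _ => None) (fun _ _ => erefl); tauto.
Qed.
End Graphs.

Definition J n (i : 'I_n) := filter (fun j : 'I_n => i < j) (enum 'I_n).
Definition rows n T (blk : 'I_n -> 'I_n -> T) := [seq [seq blk i j | j <- J i] | i <- enum 'I_n].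

Lemma pe_def n blk : pairs_enc n blk = nseq n true ++ false :: flatten (flatten (rows blk)).
Proof. by []. Qed.

Lemma pe_ext n (blk blk' : 'I_n -> 'I_n -> seq bool) :
  (forall i j : 'I_n, i < j -> blk i j = blk' i j) -> pairs_enc n blk = pairs_enc n blk'.
Proof.
move=> E; rewrite !pe_def; congr (_ ++ _ :: flatten (flatten _)).
apply: eq_map => i; apply/eq_in_map => j; rewrite mem_filter => /andP [H _]; exact: E.
Qed.

Lemma mem_rows n (T : eqType) (blk : 'I_n -> 'I_n -> T) (i j : 'I_n) : i < j -> blk i j \in flatten (rows blk).
Proof.
move=> H; apply/flattenP; exists [seq blk i j | j <- J i]; first by apply: map_f; rewrite mem_enum.
by apply: map_f; rewrite mem_filter H mem_enum.
Qed.

Lemma all_rows n (T : eqType) (P : pred T) (blk : 'I_n -> 'I_n -> T) :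
  (forall i j : 'I_n, i < j -> P (blk i j)) -> all P (flatten (rows blk)).
Proof.
move=> H; apply/allP => x /flattenP [row /mapP [i _ ->] /mapP [j Hj ->]].
by apply: H; move: Hj; rewrite mem_filter => /andP [].
Qed.

Lemma map_rows n T T' (g : T -> T') (blk : 'I_n -> 'I_n -> T) :
  map g (flatten (rows blk)) = flatten (rows (fun i j => g (blk i j))).
Proof. rewrite map_flatten -map_comp; congr flatten; apply: eq_map => i /=; by rewrite -map_comp. Qed.

Lemma shape_rows n T T' (blk : 'I_n -> 'I_n -> T) (blk' : 'I_n -> 'I_n -> T') :
  shape (rows blk) = shape (rows blk').
Proof. by rewrite /shape -!map_comp; apply: eq_map => i /=; rewrite !size_map. Qed.

Lemma size_rows n T T' (blk : 'I_n -> 'I_n -> T) (blk' : 'I_n -> 'I_n -> T') :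
  size (flatten (rows blk)) = size (flatten (rows blk')).
Proof. by rewrite !size_flatten (shape_rows blk blk'). Qed.

Lemma size_flat_q q (L : seq (seq bool)) : all (fun w => size w == q) L -> size (flatten L) = q * size L.
Proof. elim: L => [|w L IH] /=; first by rewrite muln0. by move=> /andP [/eqP Hw /IH IH2]; rewrite size_cat Hw IH2 mulnS. Qed.

Lemma shape_q q (L : seq (seq bool)) : all (fun w => size w == q) L -> shape L = nseq (size L) q.
Proof. by elim: L => [|w L IH] //= /andP [/eqP -> /IH ->]. Qed.

Lemma pe_prefix n m (X Y : seq bool) : nseq n true ++ false :: X = nseq m true ++ false :: Y -> n = m /\ X = Y.
Proof.
elim: n m => [|n IH] [|m] //=; first by case.
by case=> /IH [-> ->].
Qed.

Lemma flat_inj q (L L' : seq (seq bool)) : all (fun w => size w == q) L -> all (fun w => size w == q) L' ->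
  size L = size L' -> flatten L = flatten L' -> L = L'.
Proof.
move=> A A' S E; rewrite -(flattenK L) -(flattenK L') (shape_q A) (shape_q A') S E //.
Qed.

Lemma pe_inj n q (blk blk' : 'I_n -> 'I_n -> seq bool) : 0 < q ->
  (forall i j : 'I_n, i < j -> size (blk i j) = q) -> (forall i j : 'I_n, i < j -> size (blk' i j) = q) ->
  pairs_enc n blk = pairs_enc n blk' -> forall i j : 'I_n, i < j -> blk i j = blk' i j.
Proof.
move=> q0 H H'; rewrite !pe_def => /pe_prefix [_ E].
have A : all (fun w => size w == q) (flatten (rows blk)) by apply: all_rows => i j /H ->.
have A' : all (fun w => size w == q) (flatten (rows blk')) by apply: all_rows => i j /H' ->.
have E1 := flat_inj A A' (size_rows _ _) E.
have E2 : rows blk = rows blk' by rewrite -(flattenK (rows blk)) -(flattenK (rows blk')) (shape_rows blk blk') E1.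
move=> i j ij.
have /eq_in_map Ei := E2; have := Ei i; rewrite mem_enum => /(_ isT) /eq_in_map Ej.
by apply: Ej; rewrite mem_filter ij mem_enum.
Qed.

Lemma row_decode n (Jl : seq 'I_n) (l : seq (seq bool)) : uniq Jl -> size l = size Jl ->
  l = map (fun j => nth [::] l (index j Jl)) Jl.
Proof.
elim: Jl l => [|j0 J' IH] [|x l] //= /andP [nj U] [S].
rewrite eqxx /=; congr cons.
rewrite {1}(IH l U S); apply/eq_in_map => j jJ /=.
by case: eqP => // E; rewrite E jJ in nj.
Qed.

Lemma decode_gen n (I : seq 'I_n) (bs : seq (seq bool)) : uniq I ->
  size bs = size (flatten [seq [seq tt | j <- J i] | i <- I]) ->
  exists c : 'I_n -> 'I_n -> seq bool, bs = flatten [seq [seq c i j | j <- J i] | i <- I].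
Proof.
elim: I bs => [|i0 I IH] bs /=.
  by case: bs => // _ _; exists (fun _ _ => [::]).
move=> /andP [ni U]; rewrite size_cat size_map => S.
have S2 : size (drop (size (J i0)) bs) = size (flatten [seq [seq tt | _ <- J i] | i <- I]) by rewrite size_drop; lia.
have [c' E'] := IH _ U S2.
have UJ : uniq (J i0) by rewrite filter_uniq // enum_uniq.
have St : size (take (size (J i0)) bs) = size (J i0) by rewrite size_take; case: ltnP => //; lia.
set c0 := fun j => nth [::] (take (size (J i0)) bs) (index j (J i0)).
exists (fun i j => if i == i0 then c0 j else c' i j).
rewrite -(cat_take_drop (size (J i0)) bs) eqxx {1}(row_decode UJ St) E'; congr (_ ++ _).
congr flatten; apply/eq_in_map => i iI /=.
by case: eqP => // E; rewrite -E iI in ni.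
Qed.

Lemma decode n (bs : seq (seq bool)) : size bs = size (flatten (rows (fun (_ _ : 'I_n) => tt))) ->
  exists c : 'I_n -> 'I_n -> seq bool, bs = flatten (rows c).
Proof. exact: decode_gen (enum_uniq _). Qed.

Lemma size_onehot r o : size (onehot r o) = r.
Proof. by rewrite size_map size_enum_ord. Qed.

Lemma onehot_inj r : injective (onehot r).
Proof.
have key : forall (o : option 'I_r) (c : 'I_r), nth false (onehot r o) c = (o == Some c).
  by move=> o c; rewrite (nth_map c) ?size_enum_ord // nth_ord_enum.
move=> [c|] [d|] E.
- by have := key (Some c) c; rewrite E key eqxx => /eqP [->].
- by have := key (Some c) c; rewrite E key eqxx.
- by have := key (Some d) d; rewrite -E key eqxx.
- by [].
Qed.

Definition dec r (w : seq bool) : option 'I_r := odflt None [pick v : option 'I_r | w == onehot r v].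
Lemma decK r v : dec r (onehot r v) = v.
Proof.
rewrite /dec; case: pickP => [v' /eqP /onehot_inj -> //|H].
by have := H v; rewrite eqxx.
Qed.

Lemma pe_nil n (blk : 'I_n -> 'I_n -> seq bool) : pairs_enc n blk <> [::].
Proof. by rewrite pe_def; case: n blk. Qed.

Lemma back_gen p valid g q m (blkY : 'I_m -> 'I_m -> seq bool) s :
  0 < q -> (forall w, size w = p.+1 -> size (g w) = q) ->
  (forall i j : 'I_m, i < j -> size (blkY i j) = q) ->
  bf p valid g s = pairs_enc m blkY ->
  exists c : 'I_m -> 'I_m -> seq bool, s = pairs_enc m c /\ forall i j : 'I_m, i < j -> okb p valid (c i j).
Proof.
move=> q0 Hg HY E.
have NE : bf p valid g s <> [::] by rewrite E; apply: pe_nil.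
have [n [bs [Es A Eb]]] := bf_back NE.
move: E; rewrite Eb pe_def => /pe_prefix [En Ef]; subst n.
have Sz : size bs = size (flatten (rows (fun (_ _ : 'I_m) => tt))).
  have S1 : size (flatten (map g bs)) = q * size bs.
    rewrite (@size_flat_q q) ?size_map //; apply/allP => w /mapP [v vb ->].
    by move/allP: A => /(_ v vb) /andP [/eqP /Hg -> _].
  have S2 : size (flatten (flatten (rows blkY))) = q * size (flatten (rows blkY)).
    by apply: size_flat_q; apply: all_rows => i j /HY ->.
  move: S1 S2; rewrite Ef (size_rows blkY (fun _ _ => tt)) => -> /eqP.
  by rewrite eqn_pmul2l // => /eqP.
have [c Ec] := decode Sz; exists c; split; first by rewrite Es Ec pe_def.
move=> i j ij; move/allP: A; apply; rewrite Ec; exact: mem_rows.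
Qed.

Definition mkU n (f : 'I_n -> 'I_n -> bool) : ugraph.
refine (UGraph n (fun i j => if i < j then f i j else if j < i then f j i else false) _ _).
- by move=> x y; case: (ltngtP x y).
- by move=> x; rewrite ltnn.
Defined.

Definition mkO n (f1 f2 : 'I_n -> 'I_n -> bool) : ograph.
refine (OGraph n (fun i j => if i < j then f1 i j else if j < i then f2 j i && ~~ f1 j i else false) _ _).
- by move=> x; rewrite ltnn.
- move=> x y; case: (ltngtP x y) => //= H.
  + by move=> ->; rewrite andbF.
  + by case/andP => _ /negbTE.
Defined.

Lemma ug_eq n (a1 a2 : 'I_n -> 'I_n -> bool) s1 i1 s2 i2 :
  (forall x y, a1 x y = a2 x y) -> UGraph n a1 s1 i1 = UGraph n a2 s2 i2.
Proof.
move=> Ha; have E : a1 = a2 by apply: functional_extensionality => x; apply: functional_extensionality => y.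
subst a2; by rewrite (proof_irrelevance _ s1 s2) (proof_irrelevance _ i1 i2).
Qed.

Lemma og_eq n (a1 a2 : 'I_n -> 'I_n -> bool) s1 i1 s2 i2 :
  (forall x y, a1 x y = a2 x y) -> OGraph n a1 s1 i1 = OGraph n a2 s2 i2.
Proof.
move=> Ha; have E : a1 = a2 by apply: functional_extensionality => x; apply: functional_extensionality => y.
subst a2; by rewrite (proof_irrelevance _ s1 s2) (proof_irrelevance _ i1 i2).
Qed.

Lemma enc_ucol_inj X X' : enc_ucol X = enc_ucol X' -> X = X'.
Proof.
case: X => m a s1 i1; case: X' => m' a' s2 i2; rewrite /enc_ucol /= => E.
have [Em _] := pe_prefix E; subst m'.
have Hb : forall i j : 'I_m, i < j -> [:: a i j] = [:: a' i j].
  by move=> i j ij; apply: (pe_inj (q := 1) isT _ _ E ij) => ? ? ?.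
apply: ug_eq => x y; case: (ltngtP x y) => [H|H|/val_inj ->]; last by rewrite i1 i2.
- by case: (Hb _ _ H).
- by rewrite s1 s2; case: (Hb _ _ H).
Qed.

Lemma enc_ocol_inj Y Y' : enc_ocol Y = enc_ocol Y' -> Y = Y'.
Proof.
case: Y => m a s1 i1; case: Y' => m' a' s2 i2; rewrite /enc_ocol /= => E.
have [Em _] := pe_prefix E; subst m'.
have Hb : forall i j : 'I_m, i < j -> [:: a i j; a j i] = [:: a' i j; a' j i].
  by move=> i j ij; apply: (pe_inj (q := 2) isT _ _ E ij) => ? ? ?.
apply: og_eq => x y; case: (ltngtP x y) => [H|H|/val_inj ->]; last by rewrite s1 s2.
- by case: (Hb _ _ H).
- by case: (Hb _ _ H).
Qed.

Definition g1 (w : seq bool) := [:: head false w; false].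
Definition bf1 := bf 0 (fun _ => true) g1.

Lemma F1 X : bf1 (enc_ucol X) = enc_ocol (orient X).
Proof.
rewrite /bf1 /enc_ucol /enc_ocol pe_def bf_fwd; last by apply: all_rows.
rewrite map_rows -pe_def; apply: pe_ext => i j ij /=.
by rewrite ij ltnNge ltnW.
Qed.

Lemma B1 x Y : bf1 x = enc_ocol Y -> exists X, x = enc_ucol X /\ enc_ocol (orient X) = enc_ocol Y.
Proof.
move=> E; have E' := E; rewrite /enc_ocol in E'.
have [c [Ex Hc]] := back_gen (p := 0) (valid := fun _ => true) (g := g1) (q := 2)
  (blkY := fun i j => [:: oarc i j; oarc j i]) isT (fun _ _ => erefl) (fun _ _ _ => erefl) E'.
have Ex2 : x = enc_ucol (mkU (fun i j => head false (c i j))).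
  rewrite Ex /enc_ucol; apply: pe_ext => i j ij /=; rewrite ij.
  by have := Hc i j ij; rewrite /okb => /andP [/eqP S _]; case: (c i j) S => // a [].
by exists (mkU (fun i j => head false (c i j))); split => //; rewrite -E {1}Ex2 F1.
Qed.

Definition valid2 (w : seq bool) := ~~ (nth false w 0 && nth false w 1).
Definition g2 (w : seq bool) := [:: nth false w 0 || nth false w 1].
Definition bf2 := bf 1 valid2 g2.

Lemma F2 Y : bf2 (enc_ocol Y) = enc_ucol (und Y).
Proof.
rewrite /bf2 /enc_ucol /enc_ocol pe_def bf_fwd; last first.
  apply: all_rows => i j _; rewrite /okb /valid2 /=.
  by case A: (oarc i j) => //=; rewrite (oarc_asym _ _ _ A).
by rewrite map_rows -pe_def; apply: pe_ext => i j ij.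
Qed.

Lemma B2 x X : bf2 x = enc_ucol X -> exists Y, x = enc_ocol Y /\ enc_ucol (und Y) = enc_ucol X.
Proof.
move=> E; have E' := E; rewrite /enc_ucol in E'.
have [c [Ex Hc]] := back_gen (p := 1) (valid := valid2) (g := g2) (q := 1)
  (blkY := fun i j => [:: uadj i j]) isT (fun _ _ => erefl) (fun _ _ _ => erefl) E'.
set Y := mkO (fun i j => nth false (c i j) 0) (fun i j => nth false (c i j) 1).
have Ex2 : x = enc_ocol Y.
  rewrite Ex /enc_ocol; apply: pe_ext => i j ij /=; rewrite ij ltnNge ltnW //=.
  have := Hc i j ij; rewrite /okb /valid2 => /andP [/eqP S V].
  case: (c i j) S V => // a [] // b [] //= _.
  by case: a; case: b.
by exists Y; split => //; rewrite -E {1}Ex2 F2.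
Qed.

Lemma uext_transfer r (Fam : ucgraph r -> Prop) X X' xi xi' : enc_uext r X xi = enc_uext r X' xi' ->
  upartial r X xi -> upartial r X' xi' -> uextendable r Fam X xi -> uextendable r Fam X' xi'.
Proof.
move: xi xi'; case: X => m a s1 i1; case: X' => m' a' s2 i2 xi xi'; rewrite /enc_uext /= => E [P1 P2] [P1' P2'].
have [Em _] := pe_prefix E; subst m'.
have Hb : forall i j : 'I_m, i < j -> a i j :: onehot r (xi i j) = a' i j :: onehot r (xi' i j).
  by move=> i j ij; apply: (pe_inj (q := r.+1) isT _ _ E ij) => ? ? ?; rewrite /= size_onehot.
have Ea : forall x y, a x y = a' x y.
  move=> x y; case: (ltngtP x y) => [H|H|/val_inj ->]; last by rewrite i1 i2.
  - by case: (Hb _ _ H).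
  - by rewrite s1 s2; case: (Hb _ _ H).
have Ex : forall x y, xi x y = xi' x y.
  move=> x y; case: (ltngtP x y) => [H|H|/val_inj ->]; last by rewrite P2 ?P2' //= ?i1 ?i2.
  - by case: (Hb _ _ H) => _ /onehot_inj.
  - by rewrite P1 P1'; case: (Hb _ _ H) => _ /onehot_inj.
move=> [gam [Hs Hx Hf]]; exists gam; split => //.
- by move=> x y c; rewrite -Ex; apply: Hx.
- move=> [F [h [HF Hh]]]; apply: Hf; exists F, h; split => // u v A.
  by have [E1 E2] := Hh u v A; split => //; rewrite /= Ea.
Qed.

Lemma oext_transfer r (OF : ocgraph r -> Prop) Y Y' xi xi' : enc_oext r Y xi = enc_oext r Y' xi' ->
  opartial r Y xi -> opartial r Y' xi' -> oextendable r OF Y xi -> oextendable r OF Y' xi'.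
Proof.
move: xi xi'; case: Y => m a s1 i1; case: Y' => m' a' s2 i2 xi xi'; rewrite /enc_oext /= => E P P'.
have [Em _] := pe_prefix E; subst m'.
have Hb : forall i j : 'I_m, i < j -> a i j :: a j i :: onehot r (xi i j) ++ onehot r (xi j i) = a' i j :: a' j i :: onehot r (xi' i j) ++ onehot r (xi' j i).
  by move=> i j ij; apply: (pe_inj (q := (r + r).+2) isT _ _ E ij) => ? ? ?; rewrite /= size_cat !size_onehot.
have Hb2 : forall i j : 'I_m, i < j -> [/\ a i j = a' i j, a j i = a' j i, xi i j = xi' i j & xi j i = xi' j i].
  move=> i j ij; case: (Hb i j ij) => -> -> /eqP; rewrite eqseq_cat ?size_onehot //.
  by case/andP => /eqP /onehot_inj -> /eqP /onehot_inj ->.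
have Ea : forall x y, a x y = a' x y.
  move=> x y; case: (ltngtP x y) => [H|H|/val_inj ->]; last by rewrite s1 s2.
  - by case: (Hb2 _ _ H).
  - by case: (Hb2 _ _ H).
have Ex : forall x y, xi x y = xi' x y.
  move=> x y; case: (ltngtP x y) => [H|H|/val_inj ->]; last by rewrite P ?P' //= ?s1 ?s2.
  - by case: (Hb2 _ _ H).
  - by case: (Hb2 _ _ H).
move=> [gam [Hx Hf]]; exists gam; split => //.
- by move=> x y c; rewrite -Ex; apply: Hx.
- move=> [F [h [HF Hh]]]; apply: Hf; exists F, h; split => // u v A.
  by have [E1 E2] := Hh u v A; split => //; rewrite /= Ea.
Qed.

Section Ext.
Variable r : nat.

Lemma upartial_und Y (xi : 'I_(ov Y) -> 'I_(ov Y) -> option 'I_r) : opartial r Y xi -> upartial r (und Y) (xiU xi).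
Proof.
move=> P; split.
- move=> x y; rewrite /xiU.
  case A: (oarc x y); first by rewrite (oarc_asym _ _ _ A).
  case B: (oarc y x) => //; by rewrite !P ?A ?B.
- by move=> x y /=; rewrite negb_or /xiU => /andP [/negbTE -> B]; rewrite P.
Qed.

Lemma opartial_orient X (xi : 'I_(uv X) -> 'I_(uv X) -> option 'I_r) : upartial r X xi -> opartial r (orient X) (xiO xi).
Proof. by move=> [_ P] x y /=; rewrite /xiO; case: ifP => //= _ /P. Qed.

Definition valid3 (w : seq bool) := [exists v : option 'I_r, (behead w == onehot r v) && (head false w || (v == None))].
Definition g3 (w : seq bool) := head false w :: false :: behead w ++ onehot r None.
Definition bf3 := bf r valid3 g3.

Lemma g3_size w : size w = r.+1 -> size (g3 w) = (r + r).+2.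
Proof. by case: w => // a w [Sw]; rewrite /= size_cat Sw size_onehot. Qed.

Lemma okb3 w : okb r valid3 w -> exists a v, w = a :: onehot r v /\ (a || (v == None)).
Proof.
rewrite /okb /valid3; case: w => // a o /andP [_ /existsP [v /andP [/eqP /= -> H]]].
by exists a, v.
Qed.

Lemma F3 X xi : upartial r X xi -> bf3 (enc_uext r X xi) = enc_oext r (orient X) (xiO xi).
Proof.
move=> [Ps Pn]; rewrite /bf3 /enc_uext /enc_oext pe_def bf_fwd; last first.
  apply: all_rows => i j _; rewrite /okb /= size_onehot eqxx /=.
  apply/existsP; exists (xi i j); rewrite eqxx /=.
  by case A: (uadj i j) => //=; rewrite Pn ?A.
rewrite map_rows -pe_def; apply: pe_ext => i j ij /=.
by rewrite /xiO ij ltnNge ltnW.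
Qed.

Lemma B3 x Y xi : opartial r Y xi -> bf3 x = enc_oext r Y xi ->
  exists X xiX, [/\ upartial r X xiX, x = enc_uext r X xiX & enc_oext r (orient X) (xiO xiX) = enc_oext r Y xi].
Proof.
move=> PY E; have E' := E; rewrite /enc_oext in E'.
have [c [Ex Hc]] := back_gen (p := r) (valid := valid3) (g := g3) (q := (r + r).+2)
  (blkY := fun i j => oarc i j :: oarc j i :: onehot r (xi i j) ++ onehot r (xi j i)) isT g3_size
  (fun i j _ => ltac:(by rewrite /= size_cat !size_onehot)) E'.
set X := mkU (fun i j => head false (c i j)).
set xiX : 'I_(uv X) -> 'I_(uv X) -> option 'I_r := fun i j =>
  if i < j then dec r (behead (c i j)) else if j < i then dec r (behead (c j i)) else None.
have PX : upartial r X xiX.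
  split.
  - by move=> x0 y0; rewrite /xiX; case: (ltngtP x0 y0).
  - move=> x0 y0; rewrite /= /xiX; case: (ltngtP x0 y0) => // H.
    + have [a [v [-> /= Hv]]] := okb3 (Hc _ _ H); rewrite decK.
      by move=> Na; rewrite (negbTE Na) /= in Hv; apply/eqP.
    + have [a [v [-> /= Hv]]] := okb3 (Hc _ _ H); rewrite decK.
      by move=> Na; rewrite (negbTE Na) /= in Hv; apply/eqP.
have Ex2 : x = enc_uext r X xiX.
  rewrite Ex /enc_uext; apply: pe_ext => i j ij /=; rewrite /xiX ij.
  by have [a [v [-> _]]] := okb3 (Hc _ _ ij); rewrite /= decK.
exists X, xiX; split => //.
by rewrite -F3 // -Ex2.
Qed.

Definition valid4 (w : seq bool) := [exists v1 : option 'I_r, exists v2 : option 'I_r,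
  [&& drop 2 w == onehot r v1 ++ onehot r v2, ~~ (nth false w 0 && nth false w 1),
      nth false w 0 || (v1 == None) & nth false w 1 || (v2 == None)]].
Definition g4 (w : seq bool) := (nth false w 0 || nth false w 1) ::
  (if nth false w 1 then drop r (drop 2 w) else take r (drop 2 w)).
Definition bf4 := bf (r + r).+1 valid4 g4.

Lemma g4_size w : size w = (r + r).+2 -> size (g4 w) = r.+1.
Proof.
case: w => [|a [|b w]] // [Sw]; rewrite /g4 /= !drop0; case: b.
- by rewrite size_drop Sw; lia.
- by rewrite size_take Sw; case: ltnP => //; lia.
Qed.

Lemma okb4 w : okb (r + r).+1 valid4 w -> exists a b v1 v2,
  [/\ w = a :: b :: onehot r v1 ++ onehot r v2, ~~ (a && b), a || (v1 == None) & b || (v2 == None)].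
Proof.
rewrite /okb /valid4; case: w => [|a [|b w]] // /andP [_ /existsP [v1 /existsP [v2]]].
rewrite /= drop0 => /and4P [/eqP -> H1 H2 H3].
by exists a, b, v1, v2.
Qed.

Lemma F4 Y xi : opartial r Y xi -> bf4 (enc_oext r Y xi) = enc_uext r (und Y) (xiU xi).
Proof.
move=> P; rewrite /bf4 /enc_uext /enc_oext pe_def bf_fwd; last first.
  apply: all_rows => i j _; rewrite /okb /= size_cat !size_onehot eqxx /=.
  apply/existsP; exists (xi i j); apply/existsP; exists (xi j i); rewrite /= drop0 eqxx /=.
  case A: (oarc i j); first by have B := oarc_asym _ _ _ A; rewrite B /= P ?B.
  case B: (oarc j i) => //=; by rewrite !P ?A ?B.
rewrite map_rows -pe_def; apply: pe_ext => i j ij /=.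
rewrite /g4 /= ?drop0 drop_size_cat ?size_onehot // take_size_cat ?size_onehot // /xiU.
case B: (oarc j i).
  by have := oarc_asym _ _ _ B => ->.
case A: (oarc i j) => //.
by rewrite !P ?A ?B.
Qed.

Lemma B4 x X xi : upartial r X xi -> bf4 x = enc_uext r X xi ->
  exists Y xiY, [/\ opartial r Y xiY, x = enc_oext r Y xiY & enc_uext r (und Y) (xiU xiY) = enc_uext r X xi].
Proof.
move=> PX E; have E' := E; rewrite /enc_uext in E'.
have [c [Ex Hc]] := back_gen (p := (r + r).+1) (valid := valid4) (g := g4) (q := r.+1)
  (blkY := fun i j => uadj i j :: onehot r (xi i j)) isT g4_size
  (fun i j _ => ltac:(by rewrite /= size_onehot)) E'.
set Y := mkO (fun i j => nth false (c i j) 0) (fun i j => nth false (c i j) 1).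
set xiY : 'I_(ov Y) -> 'I_(ov Y) -> option 'I_r := fun i j =>
  if i < j then dec r (take r (drop 2 (c i j))) else if j < i then dec r (drop r (drop 2 (c j i))) else None.
have PY : opartial r Y xiY.
  move=> x0 y0; rewrite /= /xiY; case: (ltngtP x0 y0) => // H.
  + have [a [b [v1 [v2 [-> /= H1 H2 H3]]]]] := okb4 (Hc _ _ H).
    rewrite drop0 take_size_cat ?size_onehot // decK => Na.
    by rewrite (negbTE Na) /= in H2; apply/eqP.
  + have [a [b [v1 [v2 [-> /= H1 H2 H3]]]]] := okb4 (Hc _ _ H).
    rewrite drop0 drop_size_cat ?size_onehot // decK.
    case: b H1 H3 => //=; first by rewrite andbT => ->.
    by move=> _ /eqP.
have Ex2 : x = enc_oext r Y xiY.
  rewrite Ex /enc_oext; apply: pe_ext => i j ij /=; rewrite /xiY ij ltnNge ltnW //=.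
  have [a [b [v1 [v2 [-> /= H1 _ _]]]]] := okb4 (Hc _ _ ij).
  rewrite drop0 drop_size_cat ?take_size_cat ?size_onehot // !decK.
  by case: a b H1 => [] [].
exists Y, xiY; split => //.
by rewrite -F4 // -Ex2.
Qed.
End Ext.

Unset Implicit Arguments.
Theorem proposition7 (r : nat) (Fam : ucgraph r -> Prop) :
  exists OFam : ocgraph r -> Prop,
    poly_equiv (ColU r Fam) (ColO r OFam) /\ poly_equiv (ExtU r Fam) (ExtO r OFam).
Proof.
exists (OFam Fam); split; split.
- exists bf1; split; first exact: (@bf_poly 0 (fun _ => true) g1 2 (fun _ _ => erefl)).
  move=> x; split.
  + move=> [X [<- HX]]; exists (orient X); split; first by rewrite F1.
    by apply/C1.
  + move=> [Y [EY HY]]; have [X [Ex EO]] := B1 (esym EY).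
    exists X; split; first by [].
    by apply/C1; rewrite (enc_ocol_inj EO).
- exists bf2; split; first exact: (@bf_poly 1 valid2 g2 1 (fun _ _ => erefl)).
  move=> x; split.
  + move=> [Y [<- HY]]; exists (und Y); split; first by rewrite F2.
    by apply/C2.
  + move=> [X [EX HX]]; have [Y [Ex EU]] := B2 (esym EX).
    exists Y; split; first by [].
    by apply/C2; rewrite (enc_ucol_inj EU).
- exists (bf3 r); split; first exact: (@bf_poly r (valid3 r) (g3 r) (r + r).+2 (@g3_size r)).
  move=> x; split.
  + move=> [X [xi [P <- H]]]; exists (orient X), (xiO xi); split.
    * exact: opartial_orient.
    * by rewrite F3.
    * by apply/M1.
  + move=> [Y [xi [P EY H]]]; have [X [xiX [PX Ex EO]]] := B3 P (esym EY).
    exists X, xiX; split => //.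
    apply/(M1 _ PX); apply: (oext_transfer (esym EO)) => //.
    exact: opartial_orient.
- exists (bf4 r); split; first exact: (@bf_poly (r + r).+1 (valid4 r) (g4 r) r.+1 (@g4_size r)).
  move=> x; split.
  + move=> [Y [xi [P <- H]]]; exists (und Y), (xiU xi); split.
    * exact: upartial_und.
    * by rewrite F4.
    * by apply/M2.
  + move=> [X [xi [P EX H]]]; have [Y [xiY [PY Ex EU]]] := B4 P (esym EX).
    exists Y, xiY; split => //.
    apply/(M2 _ PY); apply: (uext_transfer (esym EU)) => //.
    exact: upartial_und.
Qed.
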